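(* Let $\theta>1$ be real and let $n$ be a positive integer with $n>\log_2\theta$. Then exactly one of the following holds: (i) $M_\theta(n)=\left\lfloor \frac{n}{\log\theta}-\frac12\right\rfloor$ and $n\notin\mathcal A_\theta$; (ii) $M_\theta(n)=\left\lfloor \frac{n}{\log\theta}+\frac12\right\rfloor$ and $n\in\mathcal A_\theta$.
   Context: $\lfloor x\rfloor$ is the floor of $x$ and $\{x\}=x-\lfloor x\rfloor$ its fractional part; $\log$ is the natural logarithm. For real $\theta>1$ and positive integer $n$, $M_\theta(n)=\left\lfloor 1/\{\theta^{1/n}\}\right\rfloor$ and $M'_\theta(n)=\left\lfloor 1/(\theta^{1/n}-1)\right\rfloor$. The set of atypical numbers is $\mathcal A_\theta=\{n\in\mathbb N: M'_\theta(n)\neq \lfloor n/\log\theta-1/2\rfloor\}$, where $\mathbb N$ is the set of positive integers. *)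

(* Defs.v *)
From Stdlib Require Import Reals ZArith.
Open Scope R_scope.

(* zfloor x : the greatest integer <= x  (up x is the least integer > x) *)
Definition zfloor (x : R) : Z := (up x - 1)%Z.

Arguments zfloor x%_R.
Definition frac (x : R) : R := x - IZR (zfloor x).

Definition root_n (theta : R) (n : nat) : R := Rpower theta (/ INR n).

Definition M (theta : R) (n : nat) : Z := zfloor (/ frac (root_n theta n)).

Definition M' (theta : R) (n : nat) : Z := zfloor (/ (root_n theta n - 1)).

Definition atypical (theta : R) (n : nat) : Prop :=
  (0 < n)%nat /\ M' theta n <> zfloor (INR n / ln theta - / 2).

(* Main.v *)
Require Import Defs.
From Stdlib Require Import Reals ZArith Lra Lia.
From Coquelicot Require Import Coquelicot.
Open Scope R_scope.

Definition gaux t := (2+t)*exp(-t/2) - (2-t)*exp(t/2).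

Lemma gaux_d x : derivable_pt_lim gaux x (x/2*(exp(x/2)-exp(-x/2))).
Proof.
apply is_derive_Reals. unfold gaux. auto_derive; auto.
unfold Rdiv; set (a:=exp (-x * /2)); set (b := exp (x * /2)). field.
Qed.

Lemma gaux_incr : increasing gaux.
Proof.
pose (pr := fun x => exist (fun l => derivable_pt_lim gaux x l) _ (gaux_d x)
  : derivable_pt gaux x).
apply (nonneg_derivative_1 gaux pr). intro x. simpl.
destruct (Rle_lt_dec 0 x) as [H|H].
- apply Rmult_le_pos; [lra|].
  assert (exp (-x/2) <= exp (x/2)) by (destruct (Req_dec x 0); [subst; right; f_equal; field | left; apply exp_increasing; lra]). lra.
- assert (exp (x/2) < exp (-x/2)) by (apply exp_increasing; lra).
  assert (x/2 < 0) by lra. nra.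
Qed.

Lemma key t : 0 <= t -> (2-t)*exp t <= 2+t.
Proof.
intro Ht. assert (H0 := gaux_incr 0 t Ht).
unfold gaux in H0. replace (-0/2) with 0 in H0 by field.
replace (0/2) with 0 in H0 by field. rewrite exp_0 in H0.
assert (E1 : exp (-t/2) * exp (t/2) = 1).
{ rewrite <- exp_plus. replace (-t/2 + t/2) with 0 by field. apply exp_0. }
assert (E2 : exp (t/2) * exp (t/2) = exp t).
{ rewrite <- exp_plus. f_equal. field. }
assert (P : 0 < exp (t/2)) by apply exp_pos.
nra.
Qed.

Lemma zfloor_spec x : IZR (zfloor x) <= x < IZR (zfloor x) + 1.
Proof.
unfold zfloor. destruct (archimed x) as [H1 H2].
rewrite minus_IZR. lra.
Qed.

Lemma zfloor_unique x k : IZR k <= x < IZR k + 1 -> zfloor x = k.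
Proof.
intros [H1 H2]. unfold zfloor.
rewrite <- (tech_up x (k+1)); [lia| rewrite plus_IZR; lra | rewrite plus_IZR; lra].
Qed.

Lemma zfloor_le x y : x <= y -> (zfloor x <= zfloor y)%Z.
Proof.
intro H. destruct (Z_le_gt_dec (zfloor x) (zfloor y)) as [h|h]; auto.
exfalso. assert (h' : (zfloor y + 1 <= zfloor x)%Z) by lia.
apply IZR_le in h'. rewrite plus_IZR in h'.
pose proof (zfloor_spec x). pose proof (zfloor_spec y). lra.
Qed.

Lemma zfloor_p1 x : zfloor (x + 1) = (zfloor x + 1)%Z.
Proof.
apply zfloor_unique. rewrite plus_IZR. pose proof (zfloor_spec x). lra.
Qed.

Theorem theorem1 (theta : R) (n : nat) :
  1 < theta -> (0 < n)%nat -> ln theta / ln 2 < INR n ->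
  ((M theta n = zfloor (INR n / ln theta - / 2) /\ ~ atypical theta n) /\
   ~ (M theta n = zfloor (INR n / ln theta + / 2) /\ atypical theta n))
  \/
  ((M theta n = zfloor (INR n / ln theta + / 2) /\ atypical theta n) /\
   ~ (M theta n = zfloor (INR n / ln theta - / 2) /\ ~ atypical theta n)).
Proof.
intros Hth Hn Hlt.
assert (HL : 0 < ln theta) by (rewrite <- ln_1; apply ln_increasing; lra).
assert (HL2 : 0 < ln 2) by (rewrite <- ln_1; apply ln_increasing; lra).
assert (HN : 0 < INR n) by (apply lt_0_INR; lia).
set (L := ln theta) in *.
set (t := L / INR n).
assert (Ht : 0 < t) by (unfold t; apply Rdiv_lt_0_compat; lra).
assert (Htl : t < ln 2).
{ unfold t. apply (Rmult_lt_reg_r (INR n)); auto.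
  replace (L / INR n * INR n) with L by (field; lra).
  apply (Rmult_lt_reg_r (/ ln 2)). apply Rinv_0_lt_compat; lra.
  replace (ln 2 * INR n * / ln 2) with (INR n) by (field; lra). exact Hlt. }
assert (Hr : root_n theta n = exp t).
{ unfold root_n, Rpower, t. fold L. f_equal. unfold Rdiv. ring. }
set (x := exp t) in *.
assert (Hx1 : 1 + t < x) by (apply exp_ineq1; lra).
assert (Hx2 : x < 2).
{ unfold x. rewrite <- (exp_ln 2) by lra. apply exp_increasing; lra. }
assert (HMM : M theta n = M' theta n).
{ unfold M, M', frac. rewrite Hr. f_equal. f_equal.
  rewrite (zfloor_unique x 1); [reflexivity|]. simpl. lra. }
assert (Hy : INR n / L = / t) by (unfold t; field; lra).
set (z := / (x - 1)).
assert (Hz1 : z < / t).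
{ unfold z. apply Rinv_lt_contravar; nra. }
assert (Hz2 : / t - / 2 <= z).
{ pose proof (key t (Rlt_le _ _ Ht)) as K. fold x in K.
  unfold z.
  assert (E : / t - / 2 = (2 - t) / (2 * t)) by (field; lra).
  rewrite E.
  apply (Rmult_le_reg_r (2 * t * (x - 1))). nra.
  replace (/ (x - 1) * (2 * t * (x - 1))) with (2 * t) by (field; lra).
  replace ((2 - t) / (2 * t) * (2 * t * (x - 1))) with ((2-t)*(x-1)) by (field; lra).
  lra. }
assert (HM' : M' theta n = zfloor z) by (unfold M'; rewrite Hr; reflexivity).
rewrite Hy in *.
assert (Hb : zfloor (/ t + / 2) = (zfloor (/ t - / 2) + 1)%Z).
{ rewrite <- zfloor_p1. f_equal. field. lra. }
assert (A1 := zfloor_le _ _ Hz2).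
assert (A2 : (zfloor z <= zfloor (/ t + / 2))%Z) by (apply zfloor_le; lra).
rewrite HMM, HM'. unfold atypical. fold L. rewrite HM', Hy.
destruct (Z.eq_dec (zfloor z) (zfloor (/ t - / 2))) as [e|e].
- left. split.
  + split; auto. intros [_ h]. auto.
  + intros [h1 [_ h2]]. apply h2. lia.
- right. split.
  + split; [lia|]. split; auto.
  + intros [h1 h2]. auto.
Qed.
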